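(* Fix $0<B<1$ and $H>0$, and let $\beta(s)=(x(s),0,z(s))$ be the curve with $$x(s)=\frac1H\sqrt{1+B^2+2B\sin\!\big(Hs+\tfrac{3\pi}{2}\big)},\qquad z(s)=\int_{3\pi/(2H)}^{\,s+3\pi/(2H)}\frac{1+B\sin(Ht)}{\sqrt{1+B^2+2B\sin(Ht)}}\,dt .$$ Then $\beta$ is parametrized by arc length and $z'(s)>0$ for all $s$. Let $s_0>0$ be the smallest positive value with $x''(s_0)=0$ (so $\cos(Hs_0)=B$, i.e. $s_0=\frac1H\arccos B$), and let $g:[-s_0,s_0]\to\mathbb R$, $g(s)=x(s)-\frac{x'(s)}{z'(s)}z(s)$. Then: (i) $g(0)=\frac{1-B}{H}>0$; (ii) $g'(0)=g'(s_0)=0$; (iii) $g$ is increasing on $(-s_0,0)$ and decreasing on $(0,s_0)$.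
   Context: Rotating $\beta$ about the $z$-axis gives a Delaunay unduloid (embedded complete surface of revolution with constant mean curvature $H$, where mean curvature is the unnormalized sum of principal curvatures) whose neck lies in the plane $z=0$ at $s=0$. *)

(* Defs.v *)
From Stdlib Require Import Reals Lra ClassicalEpsilon.
Open Scope R_scope.

(* Oriented Riemann integral of f from a to b (Stdlib's RiemannInt is oriented:
   for b < a it is minus the integral from b to a).  Defined by choice as the
   value of RiemannInt for any integrability proof (RiemannInt is
   proof-irrelevant); only used for continuous integrands, which are integrable. *)
Definition RInt (f : R -> R) (a b : R) : R :=
  epsilon (inhabits 0) (fun v => exists pr : Riemann_integrable f a b, RiemannInt pr = v).

Definition xcoord (B H s : R) : R :=
  / H * sqrt (1 + B ^ 2 + 2 * B * sin (H * s + 3 * PI / 2)).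

Definition zintegrand (B H t : R) : R :=
  (1 + B * sin (H * t)) / sqrt (1 + B ^ 2 + 2 * B * sin (H * t)).

Definition zcoord (B H s : R) : R :=
  RInt (zintegrand B H) (3 * PI / (2 * H)) (s + 3 * PI / (2 * H)).

Definition s0 (B H : R) : R := acos B / H.

Definition gfun (B H : R) (dx dz : R -> R) (s : R) : R :=
  xcoord B H s - dx s / dz s * zcoord B H s.

(* Main.v *)
Require Import Defs.
From Stdlib Require Import Reals Lra Psatz ClassicalEpsilon FunctionalExtensionality.
From Coquelicot Require Import Coquelicot.
Open Scope R_scope.

Definition Df B H s := 1 + B^2 - 2*B*cos(H*s).
Definition dX B H s := B*sin(H*s)/sqrt(Df B H s).
Definition dZ B H s := (1 - B*cos(H*s))/sqrt(Df B H s).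
Definition ddX B H s := B*H*(cos(H*s) - B)*(1-B*cos(H*s))/(sqrt(Df B H s)^3).

Lemma Df_pos B H s : 0 < B < 1 -> 0 < Df B H s.
Proof. intros hB. unfold Df. pose proof (COS_bound (H*s)). nra. Qed.

Lemma sin3 t : sin (t + 3 * PI / 2) = - cos t.
Proof.
  replace (3*PI/2) with (3*(PI/2)) by field.
  rewrite sin_plus, cos_3PI2, sin_3PI2. ring.
Qed.

Lemma cos3 t : cos (t + 3 * PI / 2) = sin t.
Proof.
  replace (3*PI/2) with (3*(PI/2)) by field.
  rewrite cos_plus, cos_3PI2, sin_3PI2. ring.
Qed.

Lemma xcoord_eq B H s : xcoord B H s = / H * sqrt (Df B H s).
Proof. unfold xcoord, Df. rewrite sin3. f_equal. f_equal. ring. Qed.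

Lemma dX_ok B H s : 0 < B < 1 -> 0 < H -> derivable_pt_lim (xcoord B H) s (dX B H s).
Proof.
  intros hB hH. apply is_derive_Reals.
  apply (is_derive_ext (fun s => / H * sqrt (Df B H s))).
  { intros t. now rewrite xcoord_eq. }
  pose proof (Df_pos B H s hB) as hD.
  unfold Df in *. auto_derive. lra.
  unfold dX, Df.
  replace (sqrt (1 + B * (B * 1) + - (2 * B * cos (H * s)))) with (sqrt (1+B^2-2*B*cos(H*s))) by (f_equal; ring).
  assert (0 < sqrt (1+B^2-2*B*cos(H*s))) by (apply sqrt_lt_R0; lra).
  field. lra.
Qed.

Lemma ddX_ok B H s : 0 < B < 1 -> 0 < H -> derivable_pt_lim (dX B H) s (ddX B H s).
Proof.
  intros hB hH. apply is_derive_Reals.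
  pose proof (Df_pos B H s hB) as hD.
  unfold dX, ddX, Df in *.
  assert (0 < sqrt (1+B^2-2*B*cos(H*s))) by (apply sqrt_lt_R0; lra).
  auto_derive.
  { replace (sqrt (1 + B * (B * 1) + - (2 * B * cos (H * s)))) with (sqrt (1+B^2-2*B*cos(H*s))) by (f_equal; ring).
    split; [nra|split;[lra|exact I]]. }
  replace (sqrt (1 + B * (B * 1) + - (2 * B * cos (H * s)))) with (sqrt (1+B^2-2*B*cos(H*s))) by (f_equal; ring).
  pose proof (sqrt_sqrt _ (Rlt_le _ _ hD)) as hq.
  pose proof (sin2_cos2 (H*s)) as hsc.
  set (q := sqrt (1 + B^2 - 2*B*cos(H*s))) in *.
  set (co := cos (H*s)) in *. set (si := sin (H*s)) in *.
  unfold Rsqr in hsc.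
  assert (hs2 : si * si = 1 - co*co) by lra.
  field [hq hs2]. lra.
Qed.

Lemma zint_cont B H t : 0 < B < 1 -> continuous (zintegrand B H) t.
Proof.
  intros hB. apply (ex_derive_continuous (K := R_AbsRing) (V := R_NormedModule)). unfold zintegrand.
  pose proof (SIN_bound (H*t)).
  auto_derive. assert (0 < 1 + B * (B * 1) + 2 * B * sin (H * t)) by nra.
  split; [lra | split; [apply Rgt_not_eq, sqrt_lt_R0; lra | exact I]].
Qed.

Lemma RInt_eq (f : R -> R) a b : (forall t, continuous f t) -> Defs.RInt f a b = Coquelicot.RInt.RInt f a b.
Proof.
  intros hc.
  assert (pr : Riemann_integrable f a b).
  { apply ex_RInt_Reals_0, (ex_RInt_continuous (V := R_CompleteNormedModule)). intros; apply hc. }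
  unfold Defs.RInt.
  destruct (epsilon_spec (inhabits 0) (fun v => exists pr : Riemann_integrable f a b, RiemannInt pr = v))
    as [pr' E].
  { exists (RiemannInt pr). now exists pr. }
  rewrite <- E. symmetry. apply RInt_Reals.
Qed.

Lemma dZ_ok B H s : 0 < B < 1 -> 0 < H -> derivable_pt_lim (zcoord B H) s (dZ B H s).
Proof.
  intros hB hH. apply is_derive_Reals.
  set (c := 3 * PI / (2 * H)).
  apply (is_derive_ext (fun s => Coquelicot.RInt.RInt (zintegrand B H) c (s + c))).
  { intros t. unfold zcoord. fold c. symmetry. apply RInt_eq. intros; now apply zint_cont. }
  replace (dZ B H s) with (scal 1 (zintegrand B H (s + c))).
  2:{ unfold scal; simpl; unfold mult; simpl; rewrite Rmult_1_l. unfold zintegrand, dZ, Df.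
      replace (H * (s + c)) with (H * s + 3 * PI / 2) by (unfold c; field; lra).
      rewrite sin3. f_equal; [ring | f_equal; ring]. }
  apply (is_derive_comp (fun u => Coquelicot.RInt.RInt (zintegrand B H) c u) (fun s => s + c)).
  - apply is_derive_RInt with (a := c).
    + apply filter_forall. intros u. apply (RInt_correct (V := R_CompleteNormedModule)), (ex_RInt_continuous (V := R_CompleteNormedModule)).
      intros; now apply zint_cont.
    + now apply zint_cont.
  - auto_derive; auto.
Qed.

Lemma dZ_pos B H s : 0 < B < 1 -> 0 < dZ B H s.
Proof.
  intros hB. unfold dZ. pose proof (Df_pos B H s hB).
  pose proof (COS_bound (H*s)).
  apply Rdiv_lt_0_compat. nra. apply sqrt_lt_R0; lra.
Qed.

Lemma z0 B H : 0 < B < 1 -> zcoord B H 0 = 0.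
Proof.
  intros hB. unfold zcoord. rewrite Rplus_0_l, RInt_eq.
  - apply (RInt_point (V := R_CompleteNormedModule)).
  - intros; now apply zint_cont.
Qed.

Lemma z_pos B H s : 0 < B < 1 -> 0 < H -> 0 < s -> 0 < zcoord B H s.
Proof.
  intros hB hH hs.
  destruct (MVT_cor2 (zcoord B H) (dZ B H) 0 s hs) as [c [E _]].
  { intros; now apply dZ_ok. }
  rewrite z0 in E by auto. pose proof (dZ_pos B H c hB). nra.
Qed.

Lemma z_neg B H s : 0 < B < 1 -> 0 < H -> s < 0 -> zcoord B H s < 0.
Proof.
  intros hB hH hs.
  destruct (MVT_cor2 (zcoord B H) (dZ B H) s 0 hs) as [c [E _]].
  { intros; now apply dZ_ok. }
  rewrite z0 in E by auto. pose proof (dZ_pos B H c hB). nra.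
Qed.

Definition Qf B H s := B*sin(H*s)/(1-B*cos(H*s)).
Definition dQ B H s := B*H*(cos(H*s)-B)/(1-B*cos(H*s))^2.

Lemma dQ_ok B H s : 0 < B < 1 -> 0 < H -> derivable_pt_lim (Qf B H) s (dQ B H s).
Proof.
  intros hB hH. apply is_derive_Reals. unfold Qf, dQ.
  pose proof (COS_bound (H*s)). pose proof (sin2_cos2 (H*s)) as hsc. unfold Rsqr in hsc.
  assert (0 < 1 - B * cos (H*s)) by nra.
  auto_derive. { lra. }
  assert (hs2 : sin (H*s) * sin (H*s) = 1 - cos (H*s) * cos (H*s)) by lra.
  field [hs2]. lra.
Qed.

Definition G B H s := xcoord B H s - Qf B H s * zcoord B H s.

Lemma G_ok B H s : 0 < B < 1 -> 0 < H -> derivable_pt_lim (G B H) s (- dQ B H s * zcoord B H s).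
Proof.
  intros hB hH.
  replace (- dQ B H s * zcoord B H s) with
    (dX B H s - (dQ B H s * zcoord B H s + Qf B H s * dZ B H s)).
  - apply derivable_pt_lim_minus. now apply dX_ok.
    apply derivable_pt_lim_mult. now apply dQ_ok. now apply dZ_ok.
  - unfold dX, dZ, Qf. pose proof (Df_pos B H s hB).
    assert (0 < sqrt (Df B H s)) by (apply sqrt_lt_R0; lra).
    pose proof (COS_bound (H*s)).
    assert (0 < 1 - B * cos (H*s)) by nra.
    field. lra.
Qed.

Lemma gfun_G B H dx dz : 0 < B < 1 -> 0 < H ->
  (forall s, derivable_pt_lim (xcoord B H) s (dx s)) ->
  (forall s, derivable_pt_lim (zcoord B H) s (dz s)) ->
  gfun B H dx dz = G B H.
Proof.
  intros hB hH hx hz. apply functional_extensionality. intros s.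
  unfold gfun, G. f_equal. f_equal.
  rewrite (uniqueness_limite _ _ _ _ (hx s) (dX_ok B H s hB hH)).
  rewrite (uniqueness_limite _ _ _ _ (hz s) (dZ_ok B H s hB hH)).
  unfold dX, dZ, Qf. pose proof (Df_pos B H s hB).
  assert (0 < sqrt (Df B H s)) by (apply sqrt_lt_R0; lra).
  pose proof (COS_bound (H*s)).
  assert (0 < 1 - B * cos (H*s)) by nra.
  field. lra.
Qed.

Lemma Hs0 B H : 0 < H -> H * s0 B H = acos B.
Proof. intros. unfold s0. field. lra. Qed.

Lemma cos_gt B H s : 0 < B < 1 -> 0 < H -> - s0 B H < s < s0 B H -> B < cos (H * s).
Proof.
  intros hB hH [h1 h2].
  pose proof (acos_bound_lt B ltac:(lra)) as hA.
  assert (E : cos (acos B) = B) by (apply cos_acos; lra).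
  assert (hu : forall u, 0 <= u < acos B -> B < cos u).
  { intros u hu. rewrite <- E at 1. apply cos_decreasing_1; lra. }
  unfold s0 in *.
  assert (H * s < acos B).
  { apply (Rmult_lt_compat_l H) in h2; auto. replace (H * (acos B / H)) with (acos B) in h2 by (field; lra). lra. }
  assert (- acos B < H * s).
  { apply (Rmult_lt_compat_l H) in h1; auto. replace (H * - (acos B / H)) with (- acos B) in h1 by (field; lra). lra. }
  destruct (Rle_or_lt 0 s).
  - apply hu. split; [nra | lra].
  - rewrite <- cos_neg. apply hu. split; nra.
Qed.

Theorem lemma3p3 (B H : R) (hB : 0 < B < 1) (hH : 0 < H) :
  (* x, z and x' are differentiable everywhere *)
  (exists dx dz ddx : R -> R,
     (forall s, derivable_pt_lim (xcoord B H) s (dx s)) /\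
     (forall s, derivable_pt_lim (zcoord B H) s (dz s)) /\
     (forall s, derivable_pt_lim dx s (ddx s))) /\
  (forall dx dz ddx : R -> R,
     (forall s, derivable_pt_lim (xcoord B H) s (dx s)) ->
     (forall s, derivable_pt_lim (zcoord B H) s (dz s)) ->
     (forall s, derivable_pt_lim dx s (ddx s)) ->
     (* arc length parametrization and z' > 0 *)
     (forall s, dx s ^ 2 + dz s ^ 2 = 1) /\
     (forall s, 0 < dz s) /\
     (* s0 is the smallest positive zero of x'', and cos(H s0) = B *)
     (0 < s0 B H /\ ddx (s0 B H) = 0 /\ (forall s, 0 < s < s0 B H -> ddx s <> 0) /\
      cos (H * s0 B H) = B) /\
     (* (i) *)
     (gfun B H dx dz 0 = (1 - B) / H /\ 0 < (1 - B) / H) /\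
     (* (ii) *)
     (derivable_pt_lim (gfun B H dx dz) 0 0 /\
      derivable_pt_lim (gfun B H dx dz) (s0 B H) 0) /\
     (* (iii) *)
     (forall a b, - s0 B H < a -> a < b -> b < 0 ->
        gfun B H dx dz a < gfun B H dx dz b) /\
     (forall a b, 0 < a -> a < b -> b < s0 B H ->
        gfun B H dx dz b < gfun B H dx dz a)).

Proof.
  split.
  { exists (dX B H), (dZ B H), (ddX B H).
    split; [|split]; intros s; [apply dX_ok|apply dZ_ok|apply ddX_ok]; auto. }
  intros dx dz ddx hx hz hxx.
  rewrite (gfun_G B H dx dz hB hH hx hz).
  assert (Edx : dx = dX B H).
  { apply functional_extensionality; intros s.
    exact (uniqueness_limite _ _ _ _ (hx s) (dX_ok B H s hB hH)). }
  assert (Edz : dz = dZ B H).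
  { apply functional_extensionality; intros s.
    exact (uniqueness_limite _ _ _ _ (hz s) (dZ_ok B H s hB hH)). }
  subst dx dz.
  assert (Exx : forall s, ddx s = ddX B H s).
  { intros s. exact (uniqueness_limite _ _ _ _ (hxx s) (ddX_ok B H s hB hH)). }
  pose proof (acos_bound_lt B ltac:(lra)) as hA.
  assert (E : cos (acos B) = B) by (apply cos_acos; lra).
  assert (hdQ : forall c, - s0 B H < c < s0 B H -> 0 < dQ B H c).
  { intros c hc. pose proof (cos_gt B H c hB hH hc). unfold dQ.
    pose proof (COS_bound (H*c)).
    apply Rdiv_lt_0_compat.
    - apply Rmult_lt_0_compat; [nra | lra].
    - apply pow_lt. nra. }
  split; [|split; [|split; [|split; [|split; [|split]]]]].
  - intros s. unfold dX, dZ. pose proof (Df_pos B H s hB) as hD.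
    pose proof (sqrt_sqrt _ (Rlt_le _ _ hD)) as hq.
    pose proof (sin2_cos2 (H*s)) as hsc. unfold Rsqr in hsc.
    assert (0 < sqrt (Df B H s)) by (apply sqrt_lt_R0; lra).
    unfold Df in *.
    set (q := sqrt (1 + B^2 - 2*B*cos(H*s))) in *.
    assert (hs2 : sin (H*s) * sin (H*s) = 1 - cos (H*s) * cos (H*s)) by lra.
    field [hq hs2]. lra.
  - intros s. now apply dZ_pos.
  - split; [|split; [|split]].
    + unfold s0. apply Rdiv_lt_0_compat; lra.
    + rewrite Exx. unfold ddX, Df. rewrite Hs0, E by lra. unfold Rdiv. ring.
    + intros s hs. rewrite Exx. apply Rgt_not_eq.
      assert (hc : B < cos (H * s)) by (apply cos_gt; auto; lra).
      pose proof (COS_bound (H*s)).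
      pose proof (Df_pos B H s hB).
      unfold ddX. apply Rdiv_lt_0_compat.
      * apply Rmult_lt_0_compat; [|nra]. apply Rmult_lt_0_compat; [|lra]. nra.
      * apply pow_lt, sqrt_lt_R0; lra.
    + rewrite Hs0 by lra. exact E.
  - split.
    + unfold G. rewrite z0 by auto. rewrite xcoord_eq. unfold Df.
      rewrite Rmult_0_r, cos_0.
      replace (1 + B ^ 2 - 2 * B * 1) with ((1 - B)^2) by ring.
      rewrite sqrt_pow2 by lra. field. lra.
    + apply Rdiv_lt_0_compat; lra.
  - split.
    + pose proof (G_ok B H 0 hB hH) as h. rewrite z0 in h by auto.
      replace (- dQ B H 0 * 0) with 0 in h by ring. exact h.
    + pose proof (G_ok B H (s0 B H) hB hH) as h.
      replace (- dQ B H (s0 B H) * zcoord B H (s0 B H)) with 0 in h. exact h.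
      unfold dQ. rewrite Hs0, E by lra. unfold Rdiv. ring.
  - intros a b ha hab hb.
    destruct (MVT_cor2 (G B H) (fun s => - dQ B H s * zcoord B H s) a b hab) as [c [Ec hc]].
    { intros; now apply G_ok. }
    pose proof (hdQ c ltac:(lra)). pose proof (z_neg B H c hB hH ltac:(lra)).
    assert (0 < - dQ B H c * zcoord B H c) by nra. nra.
  - intros a b ha hab hb.
    destruct (MVT_cor2 (G B H) (fun s => - dQ B H s * zcoord B H s) a b hab) as [c [Ec hc]].
    { intros; now apply G_ok. }
    pose proof (hdQ c ltac:(lra)). pose proof (z_pos B H c hB hH ltac:(lra)).
    assert (- dQ B H c * zcoord B H c < 0) by nra. nra.
Qed.
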